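(* Let $\Gamma=(G,w,\ell)$ be a tropical curve, and let $(P,W)$ and $(P',W')$ be pairs with $P,P'\in\mathcal C_G$, $W,W'\subseteq V$, $P\cup W\neq\emptyset$, $P'\cup W'\ne\emptyset$. Then: (1) $D_{P,W}\sim D_{P',W'}$ if and only if $P=P'$; (2) $[D_{P,W}]$ is a theta-characteristic of $\Gamma$, i.e. $2D_{P,W}\sim K_\Gamma$.
   Context: A tropical curve is a triple $\Gamma=(G,w,\ell)$ where $G=(V,E)$ is a finite connected graph (loops and multiple edges allowed), $w\colon V\to\mathbb Z_{\ge 0}$ with $2w(v)-2+\deg_G(v)>0$ for all $v$ (loops count twice), and $\ell\colon E\to\mathbb R_{>0}$; it is viewed as a metric space with edges segments (circles for loops) of length $\ell(e)$, and $d(p,q)$ is the shortest path length. Extend $w$ to all points by $w(p)=0$ for $p\notin V$. Divisors, rational functions, linear equivalence $\sim$ and $\operatorname{Pic}(\Gamma)$ are the usual tropical ones; $K_\Gamma=\sum_{v\in V}(2w(v)-2+\deg_G(v))v$; a theta-characteristic is a class $[D]$ with $[2D]=[K_\Gamma]$. $\mathcal C_G$ is the set of $P\subseteq E$ such that every vertex has even degree in $P$. For $P\in\mathcal C_G$ and $W\subseteq V$ with $P\cup W\neq\emptyset$, let $\Gamma_{P,W}\subseteq\Gamma$ be the closed subset consisting of the edges in $P$ (with their endpoints) together with the vertices in $W$, and let $d_{P,W}(p)=d(p,\Gamma_{P,W})$. This function is piecewise linear, of slope $0$ on $P$ and $\pm1$ elsewhere, with at most one non-linear (critical) point in the interior of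 each edge. Let $\widehat G_{P,W}$ be the subdivision of $G$ obtained by inserting a vertex at each such interior critical point. The sub-orientation $O_{P,W}$ on $\widehat G_{P,W}$ is: on edges of $P$ choose any cyclic orientation (each vertex has equal in- and out-degree in $P$); orient every other edge of $\widehat G_{P,W}$ in the direction in which $d_{P,W}$ increases. For $p\in\Gamma$ let $\deg^-(p)$ be the number of edges of $\widehat G_{P,W}$ whose target is $p$ if $p\in V(\widehat G_{P,W})$, and $\deg^-(p)=1$ otherwise. Define $D_{P,W}:=\sum_{p\in\Gamma}(\deg^-(p)-1+w(p))p$ (a finite sum supported on $V(\widehat G_{P,W})$). *)

(* Defs.v *)
From HB Require Import structures.
From mathcomp Require Import all_boot all_order all_algebra.
From mathcomp Require Import boolp classical_sets reals.
Set Implicit Arguments. Unset Strict Implicit. Unset Printing Implicit Defensive.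
Import Order.TTheory GRing.Theory Num.Theory.
Local Open Scope ring_scope.

(* Tropical curves.  A finite multigraph (loops and multiple edges allowed)  *)
(* is given by finite types of vertices and edges and, for each edge, two    *)
(* endpoints [src e], [tgt e] (an arbitrary but fixed parametrisation       *)
(* direction; for a loop src e = tgt e).                                     *)

Definition gadj (V E : finType) (src tgt : E -> V) : rel V :=
  fun u v => [exists e, ((src e == u) && (tgt e == v)) || ((tgt e == u) && (src e == v))].

(* degree of v in the set of edges P, loops counted twice *)
Definition degin_set (V E : finType) (src tgt : E -> V) (P : {set E}) (v : V) : nat :=
  #|[set e in P | src e == v]| + #|[set e in P | tgt e == v]|.

Record tcurve (R : realType) := TCurve {
  tV : finType;
  tE : finType;
  tsrc : tE -> tV;
  ttgt : tE -> tV;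
  tw : tV -> nat;
  tl : tE -> R;
  tconnected : forall u v : tV, connect (gadj tsrc ttgt) u v;
  tstable : forall v : tV, (2 < 2 * tw v + degin_set tsrc ttgt (finset.setT) v)%N;
  tl_pos : forall e : tE, 0 < tl e
}.

Section TropicalCurve.
Variable R : realType.
Variable G : tcurve R.

Notation V := (tV G).
Notation E := (tE G).
Notation src := (@tsrc R G).
Notation tgt := (@ttgt R G).
Notation w := (@tw R G).
Notation l := (@tl R G).

(* Points of the metric space Gamma: vertices, and interior points of edges, *)
(* [Inner e t] being the point at distance t from [src e] along e, which is  *)
(* a genuine point iff 0 < t < l e (predicate [is_pt]).                      *)
Inductive pt := Vert of V | Inner of E & R.

Definition is_pt (p : pt) : Prop :=
  match p with Vert _ => True | Inner e t => 0 < t < l e end.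

Definition ptAt (e : E) (s : R) : pt :=
  if s == 0 then Vert (src e) else if s == l e then Vert (tgt e) else Inner e s.

Definition onEdge (e : E) (p : pt) (a : R) : Prop :=
  match p with
  | Vert v => (src e = v /\ a = 0) \/ (tgt e = v /\ a = l e)
  | Inner e' t => e' = e /\ 0 < t < l e /\ a = t
  end.

(* polygonal paths: successive points on a common closed edge; c = length *)
Inductive chain : pt -> pt -> R -> Prop :=
| chain0 p : chain p p 0
| chainS p x q e a b c :
    onEdge e p a -> onEdge e x b -> chain x q c -> chain p q (`|a - b| + c).

Definition dist (p q : pt) : R := inf [set c | chain p q c].

(* divisors: integer-valued functions on points (only values at genuine   *)
(* points matter)                                                          *)
Definition divisor := pt -> int.

Definition is_rat (f : pt -> R) : Prop :=
  forall e : E, exists (k : nat) (b : nat -> R) (m : nat -> int),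
    [/\ b 0%N = 0, b k = l e,
        forall i, (i < k)%N -> b i < b i.+1 &
        forall i, (i < k)%N -> forall s, b i <= s <= b i.+1 ->
          f (ptAt e s) = f (ptAt e (b i)) + (m i)%:~R * (s - b i)].

(* outgoing slope of f at parameter a of edge e, towards tgt e / src e *)
Definition rslope (f : pt -> R) (e : E) (a : R) : int :=
  xget 0 [set m : int | exists2 d : R, 0 < d & forall h, 0 <= h < d ->
            f (ptAt e (a + h)) = f (ptAt e a) + m%:~R * h].
Definition lslope (f : pt -> R) (e : E) (a : R) : int :=
  xget 0 [set m : int | exists2 d : R, 0 < d & forall h, 0 <= h < d ->
            f (ptAt e (a - h)) = f (ptAt e a) + m%:~R * h].

Definition divf (f : pt -> R) : divisor := fun p =>
  match p with
  | Vert v => \sum_(e | src e == v) rslope f e 0 + \sum_(e | tgt e == v) lslope f e (l e)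
  | Inner e t => rslope f e t + lslope f e t
  end.

Definition lin_equiv (D D' : divisor) : Prop :=
  exists f, is_rat f /\ forall p, is_pt p -> D p - D' p = divf f p.

Definition Kcan : divisor := fun p =>
  match p with
  | Vert v => (2 * w v)%:Z - 2 + (degin_set src tgt [set: E] v)%:Z
  | Inner _ _ => 0
  end.

Definition theta_char (D : divisor) : Prop := lin_equiv (fun p => 2 * D p) Kcan.

Definition evenP (P : {set E}) : bool := [forall v, ~~ odd (degin_set src tgt P v)].

(* cyclic orientation of P: O e = true means e oriented from src e to tgt e *)
Definition cyclic_orient (P : {set E}) (O : E -> bool) : Prop :=
  forall v, #|[set e in P | (if O e then tgt e else src e) == v]| =
            #|[set e in P | (if O e then src e else tgt e) == v]|.

Section DPW.
Variables (P : {set E}) (W : {set V}) (O : E -> bool).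

Definition GammaPW : set pt :=
  [set q | (exists e a, e \in P /\ onEdge e q a) \/ (exists v, v \in W /\ q = Vert v)].

Definition dPW (p : pt) : R := inf [set c | exists2 q, GammaPW q & c = dist p q].

Definition crit (e : E) (t : R) : Prop :=
  0 < t < l e /\
  ~ (exists d : R, exists m : R, 0 < d /\ forall s, 0 < s < l e -> `|s - t| < d ->
        dPW (ptAt e s) = dPW (ptAt e t) + m * (s - t)).

(* the edge of hat G leaving the point at parameter a of e towards tgt e  *)
(* (resp. towards src e) is oriented INTO that point, i.e. d_{P,W}          *)
(* increases towards the point along that edge                             *)
Definition into_r (e : E) (a : R) : Prop :=
  exists2 d : R, 0 < d & forall s, a < s < a + d -> s < l e ->
     dPW (ptAt e s) < dPW (ptAt e a).
Definition into_l (e : E) (a : R) : Prop :=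
  exists2 d : R, 0 < d & forall s, a - d < s < a -> 0 < s ->
     dPW (ptAt e s) < dPW (ptAt e a).

(* in-degree of a vertex of G in the sub-orientation O_{P,W} of hat G *)
Definition indegV (v : V) : nat :=
  \sum_(e in P) ((O e && (tgt e == v)) + (~~ O e && (src e == v)))%N
  + \sum_(e in ~: P) ((`[< into_r e 0 >] && (src e == v))
                     + (`[< into_l e (l e) >] && (tgt e == v)))%N.

Definition DPW : divisor := fun p =>
  match p with
  | Vert v => (indegV v)%:Z - 1 + (w v)%:Z
  | Inner e t =>
      if `[< crit e t >] then (`[< into_l e t >] + `[< into_r e t >])%:Z - 1 else 0
  end.

End DPW.
End TropicalCurve.

(* Main.v *)
Require Import Defs.
From HB Require Import structures.
From mathcomp Require Import all_boot all_order all_algebra.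
From mathcomp Require Import boolp classical_sets reals.
From mathcomp Require Import ring lra zify.
Set Implicit Arguments. Unset Strict Implicit. Unset Printing Implicit Defensive.
Import Order.TTheory GRing.Theory Num.Theory.
Local Open Scope ring_scope.
Local Open Scope classical_set_scope.
Section Edge.
Variable R : realType.
Implicit Types (F G : R -> R) (a b x y u L : R) (m n : int).

Definition hasRS F a m := exists2 d : R, 0 < d & forall h, 0 <= h < d -> F (a + h) = F a + m%:~R * h.
Definition hasLS F a m := exists2 d : R, 0 < d & forall h, 0 <= h < d -> F (a - h) = F a + m%:~R * h.
Definition ers F a := xget 0 [set m : int | hasRS F a m].
Definition els F a := xget 0 [set m : int | hasLS F a m].

Lemma small2 (d1 d2 : R) : 0 < d1 -> 0 < d2 -> exists h : R, [/\ 0 < h, h < d1 & h < d2].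
Proof.
move=> h1 h2; case: (lerP d1 d2) => H.
  by exists (d1/2); split; lra.
by exists (d2/2); split; lra.
Qed.

Lemma int_of_mul (m n : int) (h : R) : 0 < h -> m%:~R * h = n%:~R * h -> m = n.
Proof.
move=> hp E; apply/eqP; rewrite -(eqr_int R); apply/eqP.
by apply: (mulIf (x := h)); [rewrite gt_eqF | ].
Qed.

Lemma hasRS_uniq F a m n : hasRS F a m -> hasRS F a n -> m = n.
Proof.
move=> [d1 d10 H1] [d2 d20 H2].
have [h [hp h1 h2]] := small2 d10 d20.
have := H1 h; have := H2 h; rewrite ltW //= h1 h2 => /(_ isT) -> /(_ isT) E.
apply: (int_of_mul hp); by apply: (addrI (F a)); rewrite -E.
Qed.

Lemma hasLS_uniq F a m n : hasLS F a m -> hasLS F a n -> m = n.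
Proof.
move=> [d1 d10 H1] [d2 d20 H2].
have [h [hp h1 h2]] := small2 d10 d20.
have := H1 h; have := H2 h; rewrite ltW //= h1 h2 => /(_ isT) -> /(_ isT) E.
apply: (int_of_mul hp); by apply: (addrI (F a)); rewrite -E.
Qed.

Lemma ersE F a m : hasRS F a m -> ers F a = m.
Proof. by move=> H; apply: xget_unique => // n Hn; apply: hasRS_uniq Hn H. Qed.
Lemma elsE F a m : hasLS F a m -> els F a = m.
Proof. by move=> H; apply: xget_unique => // n Hn; apply: hasLS_uniq Hn H. Qed.

End Edge.
Section Edge2.
Variable R : realType.
Implicit Types (F G : R -> R) (a b x y u L : R) (m n : int).

Lemma hasRS_add F G a m n : hasRS F a m -> hasRS G a n ->
  hasRS (fun s => F s + G s) a (m + n).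
Proof.
move=> [d1 d10 H1] [d2 d20 H2]; have [h [hp h1 h2]] := small2 d10 d20.
exists h => // t /andP[t0 th].
rewrite H1 ?t0 /=; last by lra.
rewrite H2 ?t0 /=; last by lra.
rewrite intrD; ring.
Qed.

Lemma hasLS_add F G a m n : hasLS F a m -> hasLS G a n ->
  hasLS (fun s => F s + G s) a (m + n).
Proof.
move=> [d1 d10 H1] [d2 d20 H2]; have [h [hp h1 h2]] := small2 d10 d20.
exists h => // t /andP[t0 th].
rewrite H1 ?t0 /=; last by lra.
rewrite H2 ?t0 /=; last by lra.
rewrite intrD; ring.
Qed.

Lemma hasRS_scale (c : int) F a m : hasRS F a m -> hasRS (fun s => c%:~R * F s) a (c * m).
Proof. move=> [d d0 H]; exists d => // t Ht; rewrite H // intrM; ring. Qed.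
Lemma hasLS_scale (c : int) F a m : hasLS F a m -> hasLS (fun s => c%:~R * F s) a (c * m).
Proof. move=> [d d0 H]; exists d => // t Ht; rewrite H // intrM; ring. Qed.

Lemma hasRS_ext F G a m : (forall s, F s = G s) -> hasRS F a m -> hasRS G a m.
Proof. by move=> E [d d0 H]; exists d => // t Ht; rewrite -!E H. Qed.
Lemma hasLS_ext F G a m : (forall s, F s = G s) -> hasLS F a m -> hasLS G a m.
Proof. by move=> E [d d0 H]; exists d => // t Ht; rewrite -!E H. Qed.

Definition affine F x y m := forall s, x <= s <= y -> F s = F x + m%:~R * (s - x).
Definition avoid (S : seq R) x y := forall z, z \in S -> ~~ ((x < z) && (z < y)).
Definition PLSZ F u L (S : seq R) := forall x y, u <= x -> x < y -> y <= L -> avoid S x y ->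
  exists m, affine F x y m.

Lemma avoid_catl S1 S2 x y : avoid (S1 ++ S2) x y -> avoid S1 x y.
Proof. by move=> H z zS; apply: H; rewrite mem_cat zS. Qed.
Lemma avoid_catr S1 S2 x y : avoid (S1 ++ S2) x y -> avoid S2 x y.
Proof. by move=> H z zS; apply: H; rewrite mem_cat zS orbT. Qed.

Lemma PLSZ_add F G u L S1 S2 : PLSZ F u L S1 -> PLSZ G u L S2 ->
  PLSZ (fun s => F s + G s) u L (S1 ++ S2).
Proof.
move=> HF HG x y ux xy yL av.
have [m Hm] := HF x y ux xy yL (avoid_catl av).
have [n Hn] := HG x y ux xy yL (avoid_catr av).
exists (m + n) => s Hs; rewrite Hm // Hn // intrD; ring.
Qed.

Lemma PLSZ_scale (c : int) F u L S : PLSZ F u L S -> PLSZ (fun s => c%:~R * F s) u L S.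
Proof.
move=> HF x y ux xy yL av; have [m Hm] := HF x y ux xy yL av.
exists (c * m) => s Hs; rewrite Hm // intrM; ring.
Qed.

Lemma PLSZ_ext F G u L S : (forall s, F s = G s) -> PLSZ F u L S -> PLSZ G u L S.
Proof.
move=> E HF x y ux xy yL av; have [m Hm] := HF x y ux xy yL av.
by exists m => s Hs; rewrite -!E Hm.
Qed.

Lemma PLSZ_sub F u L S u' L' : PLSZ F u L S -> u <= u' -> L' <= L -> PLSZ F u' L' S.
Proof.
move=> HF uu LL x y ux xy yL av; apply: HF => //; [exact: le_trans ux | exact: le_trans LL].
Qed.

Lemma gapR (S : seq R) a L : a < L -> exists d, [/\ 0 < d, a + d <= L & avoid S a (a + d)].
Proof.
move=> aL; elim: S => [|z S [d [d0 dL av]]].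
  by exists (L - a); split; [lra | lra | ].
case: (ltP a z) => az.
  have za : 0 < z - a by lra.
  have [h [hp h1 h2]] := small2 d0 za.
  exists h; split => //; first by lra.
  move=> w; rewrite inE => /orP[/eqP ->|wS]; first by apply/negP => /andP[_]; lra.
  apply/negP => /andP[w1 w2]; move/negP: (av w wS); apply; apply/andP; split => //; lra.
exists d; split => // w; rewrite inE => /orP[/eqP ->|wS]; last exact: av.
by apply/negP => /andP[]; lra.
Qed.
Lemma gapL (S : seq R) u a : u < a -> exists d, [/\ 0 < d, u <= a - d & avoid S (a - d) a].
Proof.
move=> ua; elim: S => [|z S [d [d0 dL av]]].
  by exists (a - u); split; [lra | lra | ].
case: (ltP z a) => az.
  have za : 0 < a - z by lra.
  have [h [hp h1 h2]] := small2 d0 za.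
  exists h; split => //; first by lra.
  move=> w; rewrite inE => /orP[/eqP ->|wS]; first by apply/negP => /andP[]; lra.
  apply/negP => /andP[w1 w2]; move/negP: (av w wS); apply; apply/andP; split => //; lra.
exists d; split => // w; rewrite inE => /orP[/eqP ->|wS]; last exact: av.
by apply/negP => /andP[]; lra.
Qed.

Lemma affine_RS F x y m : affine F x y m -> x < y -> hasRS F x m.
Proof.
move=> H xy; exists (y - x); first by lra.
move=> h /andP[h0 h1]; rewrite H; last by apply/andP; split; lra.
by have -> : x + h - x = h by ring.
Qed.

Lemma affine_LS F x y m : affine F x y m -> x < y -> hasLS F y (- m).
Proof.
move=> H xy; exists (y - x); first by lra.
move=> h /andP[h0 h1]; rewrite (H (y - h)); last by apply/andP; split; lra.
rewrite (H y); last by apply/andP; split; lra.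
rewrite intrN; ring.
Qed.

Lemma PLSZ_RS F u L S a : PLSZ F u L S -> u <= a -> a < L -> exists m, hasRS F a m.
Proof.
move=> HF ua aL; have [d [d0 dL av]] := gapR S aL.
have ad : a < a + d by lra.
have [m Hm] := HF a (a + d) ua ad dL av.
by exists m; apply: affine_RS Hm _; lra.
Qed.

Lemma PLSZ_LS F u L S a : PLSZ F u L S -> u < a -> a <= L -> exists m, hasLS F a m.
Proof.
move=> HF ua aL; have [d [d0 dL av]] := gapL S ua.
have ad : a - d < a by lra.
have [m Hm] := HF (a - d) a dL ad aL av.
by exists (- m); apply: affine_LS Hm _; lra.
Qed.

Lemma affine_join F x z y m1 m2 : affine F x z m1 -> affine F z y m2 -> x < z -> z < y ->
  m1 = m2 -> affine F x y m1.
Proof.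
move=> H1 H2 xz zy E; rewrite -E in H2 => s /andP[xs sy]; case: (lerP s z) => sz.
  by rewrite H1 // xs sz.
rewrite H2; last by rewrite sy andbT ltW.
rewrite H1; last by rewrite lexx ltW.
ring.
Qed.

Lemma harmonic_step F u L z S : PLSZ F u L (z :: S) ->
  (forall t, u < t < L -> ers F t + els F t = 0) -> PLSZ F u L S.
Proof.
move=> HF Hh x y ux xy yL av.
case Hz: ((x < z) && (z < y)); last first.
  apply: HF => // w; rewrite inE => /orP[/eqP ->|wS]; [by rewrite Hz | exact: av].
move/andP: Hz => [xz zy].
have av1 : avoid (z :: S) x z.
  move=> w; rewrite inE => /orP[/eqP ->|wS]; first by rewrite ltxx andbF.
  apply/negP => /andP[w1 w2]; move/negP: (av w wS); apply; apply/andP; split => //; lra.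
have av2 : avoid (z :: S) z y.
  move=> w; rewrite inE => /orP[/eqP ->|wS]; first by rewrite ltxx.
  apply/negP => /andP[w1 w2]; move/negP: (av w wS); apply; apply/andP; split => //; lra.
have zL : z <= L by lra.
have [m1 H1] := HF x z ux xz zL av1.
have uz : u <= z by lra.
have [m2 H2] := HF z y uz zy yL av2.
exists m1; apply: (affine_join H1 H2) => //.
have := Hh z; rewrite (_ : (u < z < L) = true); last by apply/andP; split; lra.
move=> /(_ isT).
rewrite (ersE (affine_RS H2 zy)) (elsE (affine_LS H1 xz)) => /eqP.
by rewrite subr_eq0 => /eqP.
Qed.

Lemma harmonic F u L S : PLSZ F u L S -> u < L ->
  (forall t, u < t < L -> ers F t + els F t = 0) -> exists k, affine F u L k.
Proof.
move=> HF uL Hh; elim: S HF => [|z S IH] HF.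
  by apply: HF => //; rewrite ?lexx.
by apply: IH; apply: harmonic_step HF Hh.
Qed.

Definition Pieces F u L := exists k (b : nat -> R) (m : nat -> int),
  [/\ b 0%N = u, b k = L, forall i, (i < k)%N -> b i < b i.+1 &
      forall i, (i < k)%N -> forall s, b i <= s <= b i.+1 -> F s = F (b i) + (m i)%:~R * (s - b i)].

Lemma Pieces_cat F u z L : Pieces F u z -> Pieces F z L -> Pieces F u L.
Proof.
move=> [k1 [b1 [m1 [b10 b1k inc1 f1]]]] [k2 [b2 [m2 [b20 b2k inc2 f2]]]].
have Eb : forall i, (k1 <= i)%N -> (if (i <= k1)%N then b1 i else b2 (i - k1)%N) = b2 (i - k1)%N.
  move=> i Hi; case: ifP => // Hi'; have -> : i = k1 by lia.
  by rewrite subnn b20 b1k.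
exists (k1 + k2)%N, (fun i => if (i <= k1)%N then b1 i else b2 (i - k1)%N),
  (fun i => if (i < k1)%N then m1 i else m2 (i - k1)%N); split.
- by rewrite leq0n.
- by rewrite Eb ?leq_addr // addKn b2k.
- move=> i ik; case: (ltnP i k1) => H.
    by rewrite /= (ltnW H) ?H; apply: inc1.
  rewrite /= Eb //.
  rewrite (_ : (i.+1 - k1 = (i - k1).+1)%N); last lia.
  apply: inc2; lia.
- move=> i ik s; case: (ltnP i k1) => H.
    by rewrite /= (ltnW H) ?H; apply: f1.
  rewrite /= Eb //.
  rewrite (_ : (i.+1 - k1 = (i - k1).+1)%N); last lia.
  apply: f2; lia.
Qed.

Lemma toPieces F (S : seq R) u L : u < L -> PLSZ F u L S -> Pieces F u L.
Proof.
elim: S u L => [|z S IH] u L uL HF.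
  have [m Hm] := HF u L (lexx u) uL (lexx L) (fun z (zin : z \in [::]) => ltac:(by [])).
  exists 1%N, (fun i => if i == 0%N then u else L), (fun _ => m); split => //.
  by move=> i; rewrite ltnS leqn0 => /eqP ->.
  move=> i; rewrite ltnS leqn0 => /eqP -> s /= Hs; exact: Hm.
case Hz: ((u < z) && (z < L)).
  move/andP: Hz => [uz zL]; apply: (@Pieces_cat _ _ z).
    apply: (IH u z uz) => x y ux xy yz av; apply: HF => //; first by lra.
    move=> w; rewrite inE => /orP[/eqP ->|wS]; last exact: av.
    by apply/negP => /andP[_]; lra.
  apply: (IH z L zL) => x y zx xy yL av; apply: HF => //; first by lra.
  move=> w; rewrite inE => /orP[/eqP ->|wS]; last exact: av.
  by apply/negP => /andP[]; lra.
apply: (IH u L uL) => x y ux xy yL av; apply: HF => //.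
move=> w; rewrite inE => /orP[/eqP ->|wS]; last exact: av.
apply/negP => /andP[z1 z2]; move/negP: Hz; apply; apply/andP; split; lra.
Qed.

Lemma locate (b : nat -> R) x (j : nat) : b 0%N <= x -> x < b j -> exists i, (i < j)%N /\ b i <= x < b i.+1.
Proof.
move=> b0x; elim: j => [|j IH] xbn; first by lra.
case: (ltP x (b j)) => H.
  by have [i [Hi1 Hi2]] := IH H; exists i; split => //; lia.
by exists j; split => //; apply/andP.
Qed.

Lemma ofPieces F u L : Pieces F u L -> exists S, PLSZ F u L S.
Proof.
move=> [k [b [m [b0 bk inc f]]]]; exists (mkseq b k.+1).
move=> x y ux xy yL av.
have xbk : x < b k by rewrite bk; lra.
have b0x : b 0%N <= x by rewrite b0.
have [i [ik /andP[bix xbi]]] := locate b0x xbk.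
have ybi : y <= b i.+1.
  case: (lerP y (b i.+1)) => // H; exfalso.
  have := av (b i.+1); rewrite (_ : b i.+1 \in mkseq b k.+1).
    by move=> /(_ isT); rewrite xbi H.
  by apply/mapP; exists i.+1 => //; rewrite mem_iota; lia.
exists (m i) => s /andP[xs sy].
rewrite (f i ik s); last by apply/andP; split; lra.
rewrite (f i ik x); last by apply/andP; split; lra.
ring.
Qed.

End Edge2.

Section Tent.
Variable R : realType.
Implicit Types (F G : R -> R) (a b x y u L : R) (m n : int).

Definition cls (o : bool) (m : int) := if o then (m = 1 \/ m = -1) else m = 0.
Definition PLSC F L (S : seq R) (o : bool) := forall x y, 0 <= x -> x < y -> y <= L -> avoid S x y ->
  exists m, cls o m /\ affine F x y m.

Definition critF F l t := 0 < t < l /\ ~ (exists d : R, exists m : R, 0 < d /\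
   forall s, 0 < s < l -> `|s - t| < d -> F s = F t + m * (s - t)).
Definition intoR F l a := exists2 d : R, 0 < d & forall s, a < s < a + d -> s < l -> F s < F a.
Definition intoL F a := exists2 d : R, 0 < d & forall s, a - d < s < a -> 0 < s -> F s < F a.

Lemma cls_opp o m : cls o m -> cls o (- m).
Proof. by case: o => [[]->|->]; [right|left|]. Qed.

Lemma PLSC_PLSZ F L S o : PLSC F L S o -> PLSZ F 0 L S.
Proof. move=> H x y x0 xy yL av; have [m [_ Hm]] := H x y x0 xy yL av; by exists m. Qed.

Lemma PLSC_opp F L S o : PLSC F L S o -> PLSC (fun s => - F s) L S o.
Proof.
move=> H x y x0 xy yL av; have [m [cm Hm]] := H x y x0 xy yL av.
exists (- m); split; first exact: cls_opp.
by move=> s Hs; rewrite Hm // intrN; ring.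
Qed.

Lemma PLSC_half F1 F2 L S1 S2 o : PLSC F1 L S1 o -> PLSC F2 L S2 o ->
  PLSZ (fun s => (F2 s - F1 s) / 2) 0 L (S1 ++ S2).
Proof.
move=> H1 H2 x y x0 xy yL av.
have [m1 [c1 E1]] := H1 x y x0 xy yL (avoid_catl av).
have [m2 [c2 E2]] := H2 x y x0 xy yL (avoid_catr av).
have [k Hk] : exists k : int, m2 - m1 = k * 2.
  case: o {H1 H2} c1 c2 => [[]->[]->|->->]; by [exists 0 | exists 1 | exists (-1)| exists 0].
exists k => s Hs; rewrite E1 // E2 //.
have -> : (k%:~R : R) = ((m2 - m1)%:~R) / 2 by rewrite Hk intrM -mulrA divff ?mulr1 // intr_eq0.
by rewrite intrB; field.
Qed.

Lemma PLSC_RS F L S o a : PLSC F L S o -> 0 <= a -> a < L -> exists m, cls o m /\ hasRS F a m.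
Proof.
move=> HF ua aL; have [d [d0 dL av]] := gapR S aL.
have ad : a < a + d by lra.
have [m [cm Hm]] := HF a (a + d) ua ad dL av.
by exists m; split => //; apply: affine_RS Hm _.
Qed.

Lemma PLSC_LS F L S o a : PLSC F L S o -> 0 < a -> a <= L -> exists m, cls o m /\ hasLS F a m.
Proof.
move=> HF ua aL; have [d [d0 dL av]] := gapL S ua.
have ad : a - d < a by lra.
have [m [cm Hm]] := HF (a - d) a dL ad aL av.
exists (- m); split; last by apply: affine_LS Hm _.
exact: cls_opp.
Qed.

Section TentF.
Variables (F : R -> R) (l A B c : R).
Hypotheses (l0 : 0 < l) (hAB : A <= B + l) (hBA : B <= A + l) (Hc : 2 * c = B + l - A)
  (hF : forall s, 0 <= s <= l -> F s = Num.min (A + s) (B + l - s)).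

Ltac hyps := have := Hc; have := hAB; have := hBA; have := l0; move=> ????.
Lemma c_ge0 : 0 <= c. Proof. hyps; lra. Qed.
Lemma c_lel : c <= l. Proof. hyps; lra. Qed.

Lemma tentL s : 0 <= s -> s <= c -> F s = A + s.
Proof. hyps; move=> s0 sc; rewrite hF; last by apply/andP; split; lra. by rewrite min_l //; lra. Qed.
Lemma tentR s : c <= s -> s <= l -> F s = B + l - s.
Proof. hyps; move=> s0 sc; rewrite hF; last by apply/andP; split; lra. by rewrite min_r //; lra. Qed.

Lemma tent_RS a : 0 <= a -> a < l -> hasRS F a (if a < c then 1 else -1).
Proof.
hyps; move=> a0 al; case: ifP => ac.
  exists (c - a); first by lra.
  move=> h /andP[h0 h1]; rewrite !tentL //; try lra; ring.
exists (l - a); first by lra.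
move/negbT: ac; rewrite -leNgt => ca.
move=> h /andP[h0 h1]; rewrite !tentR //; try lra; rewrite intrN; ring.
Qed.

Lemma tent_LS a : 0 < a -> a <= l -> hasLS F a (if c < a then 1 else -1).
Proof.
hyps; move=> a0 al; case: ifP => ac.
  exists (a - c); first by lra.
  move=> h /andP[h0 h1]; rewrite !tentR //; try lra; ring.
exists a => //.
move/negbT: ac; rewrite -leNgt => ca.
move=> h /andP[h0 h1]; rewrite !tentL //; try lra; rewrite intrN; ring.
Qed.

Lemma tent_PLSC : PLSC F l [:: c] true.
Proof.
hyps; move=> x y x0 xy yl av; have := av c; rewrite mem_seq1 eqxx => /(_ isT) /negP H.
case: (lerP y c) => yc.
  exists 1; split; first by left.
  move=> s /andP[xs sy]; rewrite !tentL //; try lra; ring.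
have cx : c <= x.
  case: (lerP c x) => // cx; exfalso; apply: H; apply/andP; split => //.
exists (-1); split; first by right.
move=> s /andP[xs sy]; rewrite !tentR //; try lra; rewrite intrN; ring.
Qed.

Lemma tent_crit t : 0 < t < l -> critF F l t <-> t = c.
Proof.
hyps; move=> /andP[t0 tl]; split.
  move=> [_ Hn]; apply/eqP; apply/negP => /negP tc; apply: Hn.
  case: (ltP t c) => Htc.
    exists (c - t), 1; split; first by lra.
    move=> s /andP[s0 sl]; rewrite ltr_distlC => /andP[s1 s2].
    rewrite !tentL //; lra.
  have Htc' : c < t by rewrite lt_neqAle Htc eq_sym tc.
  exists (t - c), (-1); split; first by lra.
  move=> s /andP[s0 sl]; rewrite ltr_distlC => /andP[s1 s2].
  rewrite !tentR //; lra.
move=> tc; split; first by apply/andP.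
move=> [d [m [d0 Hd]]].
have h1 : 0 < c by lra.
have h2 : 0 < l - c by lra.
have [h [hp hd hc]] := small2 d0 h1.
have [h' [hp' hd' hc']] := small2 hp h2.
rewrite tc in Hd.
have E1 := Hd (c - h'); have E2 := Hd (c + h').
have a1 : 0 < c - h' < l by apply/andP; split; lra.
have a2 : `|c - h' - c| < d by rewrite ltr_distlC; apply/andP; split; lra.
have a3 : 0 < c + h' < l by apply/andP; split; lra.
have a4 : `|c + h' - c| < d by rewrite ltr_distlC; apply/andP; split; lra.
have {E1} := E1 a1 a2; have {E2} := E2 a3 a4.
rewrite (tentL (_ : 0 <= c - h')) ?(tentR (_ : c <= c + h')) ?(tentL (_ : 0 <= c)); try lra.
Qed.

Lemma tent_intoR0 : intoR F l 0 <-> c = 0.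
Proof.
hyps; split.
  move=> [d d0 Hd]; apply/eqP; rewrite eq_le c_ge0 andbT; apply/negP => /negP; rewrite -ltNge => cp.
  have [h [hp hd hc]] := small2 d0 cp.
  have [h' [hp' hd' hc']] := small2 hp l0.
  have a1 : 0 < h' < 0 + d by apply/andP; split; lra.
  have a2 : h' < l by lra.
  have := Hd h' a1 a2; rewrite !tentL; lra.
move=> c0; exists l => // s /andP[s0 s1] sl.
rewrite !tentR; lra.
Qed.

Lemma tent_intoLl : intoL F l <-> c = l.
Proof.
hyps; split.
  move=> [d d0 Hd]; apply/eqP; rewrite eq_le c_lel /=; apply/negP => /negP; rewrite -ltNge => cp.
  have cp' : 0 < l - c by lra.
  have [h [hp hd hc]] := small2 d0 cp'.
  have [h' [hp' hd' hc']] := small2 hp l0.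
  have a1 : l - d < l - h' < l by apply/andP; split; lra.
  have a2 : 0 < l - h' by lra.
  have := Hd (l - h') a1 a2; rewrite !tentR; lra.
move=> c0; exists l => // s /andP[s0 s1] sl.
rewrite !tentL; lra.
Qed.

Lemma tent_into_c : 0 < c -> c < l -> intoL F c /\ intoR F l c.
Proof.
hyps; move=> c0 cl; split.
  exists c => // s /andP[s0 s1] sl; rewrite !tentL; lra.
exists (l - c); first lra.
move=> s /andP[s0 s1] sl; rewrite !tentR; lra.
Qed.
End TentF.

Section FlatF.
Variables (F : R -> R) (l : R).
Hypotheses (l0 : 0 < l) (hF : forall s, 0 <= s <= l -> F s = 0).

Lemma flat_RS a : 0 <= a -> a < l -> hasRS F a 0.
Proof.
move=> a0 al; exists (l - a); first by lra.
move=> h /andP[h0 h1]; rewrite !hF ?mul0r ?addr0 //; apply/andP; split; lra.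
Qed.

Lemma flat_LS a : 0 < a -> a <= l -> hasLS F a 0.
Proof.
move=> a0 al; exists a => //.
move=> h /andP[h0 h1]; rewrite !hF ?mul0r ?addr0 //; apply/andP; split; lra.
Qed.

Lemma flat_PLSC : PLSC F l [::] false.
Proof.
move=> x y x0 xy yl av; exists 0; split => //.
move=> s /andP[xs sy]; rewrite !hF ?mul0r ?addr0 //; apply/andP; split; lra.
Qed.

Lemma flat_ncrit t : ~ critF F l t.
Proof.
move=> [/andP[t0 tl] []]; exists (Num.min t (l - t)), 0; split.
  by rewrite lt_min t0 subr_gt0 tl.
move=> s /andP[s0 sl] _; rewrite !hF ?mul0r ?addr0 //; apply/andP; split; lra.
Qed.

Lemma flat_nintoR0 : ~ intoR F l 0.
Proof.
move=> [d d0 Hd]; have [h [hp hd hc]] := small2 d0 l0.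
have a1 : 0 < h < 0 + d by apply/andP; split; lra.
have := Hd h a1 hc; rewrite !hF; try lra; apply/andP; split; lra.
Qed.

Lemma flat_nintoLl : ~ intoL F l.
Proof.
move=> [d d0 Hd]; have [h [hp hd hc]] := small2 d0 l0.
have a1 : l - d < l - h < l by apply/andP; split; lra.
have a2 : 0 < l - h by lra.
have := Hd (l - h) a1 a2; rewrite !hF; try lra; apply/andP; split; lra.
Qed.
End FlatF.
End Tent.

Section Graph.
Variable R : realType.
Variable G : tcurve R.
Notation V := (tV G).
Notation E := (tE G).
Notation src := (@tsrc R G).
Notation tgt := (@ttgt R G).
Notation l := (@tl R G).
Notation pt := (pt G).

Lemma l_pos e : 0 < l e. Proof. exact: tl_pos. Qed.

Lemma chain_ge0 (p q : pt) c : chain p q c -> 0 <= c.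
Proof. by elim => // p0 x q0 e a b c0 _ _ _ H; apply: addr_ge0. Qed.

Lemma chain_cat (p x q : pt) c1 c2 : chain p x c1 -> chain x q c2 -> chain p q (c1 + c2).
Proof.
move=> H; elim: H q c2 => [p0|p0 x0 q0 e a b c0 H1 H2 _ IH] q c2 Hc.
  by rewrite add0r.
by rewrite -addrA; apply: chainS H1 H2 (IH _ _ Hc).
Qed.

Lemma chain_vert (u v : V) : exists c, chain (Vert u) (Vert v) c.
Proof.
have := tconnected u v; case/connectP => p.
elim: p u => [|y p IH] u /=; first by move=> _ ->; exists 0; exact: chain0.
move=> /andP[/existsP[e He] Hp] Hv; have [c Hc] := IH y Hp Hv.
case/orP: He => /andP[/eqP E1 /eqP E2].
  exists (`|0 - l e| + c); apply: (chainS (e := e)) Hc.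
    by left; split.
  by right; split.
exists (`|l e - 0| + c); apply: (chainS (e := e)) Hc.
  by right; split.
by left; split.
Qed.

Lemma chain_pt_vert (p : pt) : is_pt p -> exists u, (exists c, chain p (Vert u) c) /\ (exists c, chain (Vert u) p c).
Proof.
case: p => [v|e t] /=.
  by move=> _; exists v; split; exists 0; exact: chain0.
move=> Ht; exists (src e); split.
  exists (`|t - 0| + 0); apply: (chainS (e := e)) (chain0 _).
    by split => //.
  by left.
exists (`|0 - t| + 0); apply: (chainS (e := e)) (chain0 _).
  by left.
by split.
Qed.

Lemma chain_ex (p q : pt) : is_pt p -> is_pt q -> exists c, chain p q c.
Proof.
move=> /chain_pt_vert [u [[c1 H1] _]] /chain_pt_vert [v [_ [c2 H2]]].
have [c H] := chain_vert u v.
by exists (c1 + (c + c2)); apply: chain_cat H1 (chain_cat H H2).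
Qed.

Lemma lb0_chain (p q : pt) : lbound [set c | chain p q c] 0.
Proof. by move=> c /= /chain_ge0. Qed.

Lemma dist_ge0 (p q : pt) : 0 <= dist p q.
Proof.
rewrite /dist; case: (pselect (exists c, chain p q c)) => [[c Hc]|Hn].
  by apply: lb_le_inf; [exists c | exact: lb0_chain].
have -> : [set c | chain p q c] = @classical_sets.set0 R.
  by apply/seteqP; split => [c /= Hc|c //]; exfalso; apply: Hn; exists c.
by rewrite inf0.
Qed.

Lemma dist_le (p q : pt) c : chain p q c -> dist p q <= c.
Proof. by move=> H; apply: ge_inf => //; exists 0; exact: lb0_chain. Qed.

Lemma dist_step (p x q : pt) e a b : is_pt x -> is_pt q -> onEdge e p a -> onEdge e x b ->
  dist p q <= `|a - b| + dist x q.
Proof.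
move=> px pq Hp Hx; have [c0 H0] := chain_ex px pq.
rewrite addrC -lerBlDr; apply: lb_le_inf; first by exists c0.
move=> c /= Hc; rewrite lerBlDr addrC; apply: dist_le; exact: chainS Hp Hx Hc.
Qed.

Lemma onEdge_pt e (p : pt) a : onEdge e p a -> is_pt p.
Proof. by case: p => [v|e' t] //= [-> [H _]]. Qed.

Lemma ptAt_onEdge e s : 0 <= s <= l e -> onEdge e (ptAt e s) s.
Proof.
move=> /andP[s0 sl]; rewrite /ptAt; case: eqP => [->|/eqP s0']; first by left.
case: eqP => [->|/eqP sl']; first by right.
by split => //; split => //; rewrite lt_neqAle eq_sym s0' s0 lt_neqAle sl' sl.
Qed.

Lemma ptAt0 e : ptAt e 0 = Vert (src e). Proof. by rewrite /ptAt eqxx. Qed.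
Lemma ptAtl e : ptAt e (l e) = Vert (tgt e).
Proof. by rewrite /ptAt eqxx gt_eqF //; apply: l_pos. Qed.

Section DP.
Variables (P : {set E}) (W : {set V}).
Hypothesis hPW : (P != finset.set0) || (W != finset.set0).

Lemma Gamma_ne : exists q, GammaPW P W q.
Proof.
case/orP: hPW => /set0Pn [x Hx].
  by exists (Vert (src x)); left; exists x, 0; split => //; left.
by exists (Vert x); right; exists x.
Qed.

Lemma Gamma_pt q : GammaPW P W q -> is_pt q.
Proof. by case=> [[e [a [_ H]]]|[v [_ ->]]] //; apply: onEdge_pt H. Qed.

Lemma lb0_dPW (p : pt) : lbound [set c | exists2 q, GammaPW P W q & c = dist p q] 0.
Proof. by move=> c /= [q _ ->]; apply: dist_ge0. Qed.

Lemma dPW_ge0 (p : pt) : 0 <= dPW P W p.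
Proof.
have [q Hq] := Gamma_ne.
by apply: lb_le_inf; [exists (dist p q); exists q | exact: lb0_dPW].
Qed.

Lemma dPW_le (p q : pt) : GammaPW P W q -> dPW P W p <= dist p q.
Proof. by move=> H; apply: ge_inf; [exists 0; exact: lb0_dPW | exists q]. Qed.

Lemma dPW_step (p x : pt) e a b : is_pt x -> onEdge e p a -> onEdge e x b ->
  dPW P W p <= `|a - b| + dPW P W x.
Proof.
move=> px Hp Hx; have [q0 H0] := Gamma_ne.
rewrite addrC -lerBlDr; apply: lb_le_inf; first by exists (dist x q0); exists q0.
move=> c /= [q Hq ->]; rewrite lerBlDr addrC.
apply: (le_trans (dPW_le p Hq)); exact: dist_step (Gamma_pt Hq) Hp Hx.
Qed.


Lemma chain_exit (p q : pt) c : chain p q c -> forall e t, p = Inner e t -> (forall t', q <> Inner e t') ->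
 (exists c', chain (Vert (src e)) q c' /\ t + c' <= c) \/
 (exists c', chain (Vert (tgt e)) q c' /\ l e - t + c' <= c).
Proof.
elim => [p0 | p0 x q0 e0 a b c0 Hp Hx Hc IH] e t Ep Hq.
  by exfalso; apply: (Hq t).
subst p0; case: Hp => Ee [/andP[t0 tl] Ea]; subst e0 a.
case: x Hx Hc IH => [v|e' t'] Hx Hc IH.
  case: Hx => [[Ev Eb]|[Ev Eb]]; subst v b.
    left; exists c0; split => //; rewrite subr0 gtr0_norm //; lra.
  right; exists c0; split => //; rewrite ltr0_norm; lra.
case: Hx => Ee [/andP[t0' tl'] Eb]; subst e' b.
have n1 : t - t' <= `|t - t'| := ler_norm _.
have n2 : t' - t <= `|t - t'| by rewrite distrC; exact: ler_norm.
case: (IH e t' erefl Hq) => [[c' [H1 H2]]|[c' [H1 H2]]].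
  by left; exists c'; split => //; lra.
by right; exists c'; split => //; lra.
Qed.

Lemma dPW_lower e t : e \notin P -> 0 < t < l e ->
  Num.min (dPW P W (Vert (src e)) + t) (dPW P W (Vert (tgt e)) + l e - t) <= dPW P W (Inner e t).
Proof.
move=> eP Ht; have [q0 H0] := Gamma_ne.
apply: lb_le_inf; first by exists (dist (Inner e t) q0); exists q0.
move=> c /= [q Hq ->].
have pI : is_pt (Inner e t) by [].
have [c0 H0'] := chain_ex pI (Gamma_pt Hq).
apply: lb_le_inf; first by exists c0.
move=> c' /= Hc.
have Hnq : forall t', q <> Inner e t'.
  move=> t' Eq; subst q; case: Hq => [[e0 [a [He0 [Ee _]]]]|[v [_ //]]].
  by subst e0; rewrite He0 in eP.
have dl1 := dPW_le (Vert (src e)) Hq.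
have dl2 := dPW_le (Vert (tgt e)) Hq.
rewrite minEle; case: (lerP (dPW P W (Vert (src e)) + t) (dPW P W (Vert (tgt e)) + l e - t)) => hh; case: (chain_exit Hc erefl Hnq) => [[c'' [H1 H2]]|[c'' [H1 H2]]];
  have := dist_le H1; lra.
Qed.

Lemma dPW_AB e : dPW P W (Vert (src e)) <= dPW P W (Vert (tgt e)) + l e /\
                 dPW P W (Vert (tgt e)) <= dPW P W (Vert (src e)) + l e.
Proof.
have lp := l_pos e.
have H1 := @dPW_step (Vert (src e)) (Vert (tgt e)) e 0 (l e) I (or_introl (conj erefl erefl)) (or_intror (conj erefl erefl)).
have H2 := @dPW_step (Vert (tgt e)) (Vert (src e)) e (l e) 0 I (or_intror (conj erefl erefl)) (or_introl (conj erefl erefl)).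
rewrite sub0r normrN gtr0_norm // in H1; rewrite subr0 gtr0_norm // in H2.
by split; lra.
Qed.

Lemma dPW_edgeN e s : e \notin P -> 0 <= s <= l e ->
  dPW P W (ptAt e s) = Num.min (dPW P W (Vert (src e)) + s) (dPW P W (Vert (tgt e)) + l e - s).
Proof.
move=> eP /andP[s0 sl]; have lp := l_pos e; have [hA hB] := dPW_AB e.
have Hs : 0 <= s <= l e by apply/andP.
rewrite /ptAt; case: eqP => [->|/eqP s0'].
  by rewrite addr0 min_l //; lra.
case: eqP => [->|/eqP sl'].
  by rewrite min_r //; lra.
have Ht : 0 < s < l e by rewrite lt_neqAle eq_sym s0' s0 lt_neqAle sl' sl.
apply/eqP; rewrite eq_le dPW_lower // andbT le_min.
have H1 := @dPW_step (Inner e s) (Vert (src e)) e s 0 I (conj erefl (conj Ht erefl)) (or_introl (conj erefl erefl)).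
have H2 := @dPW_step (Inner e s) (Vert (tgt e)) e s (l e) I (conj erefl (conj Ht erefl)) (or_intror (conj erefl erefl)).
rewrite subr0 gtr0_norm in H1; last by lra.
rewrite ltr0_norm in H2; last by lra.
by apply/andP; split; lra.
Qed.

Lemma dPW_edgeP e s : e \in P -> 0 <= s <= l e -> dPW P W (ptAt e s) = 0.
Proof.
move=> eP Hs; apply/eqP; rewrite eq_le dPW_ge0 andbT.
have Hq : GammaPW P W (ptAt e s) by left; exists e, s; split => //; apply: ptAt_onEdge.
apply: le_trans (dPW_le _ Hq) _; apply: dist_le; exact: chain0.
Qed.

End DP.
End Graph.

Lemma hasRS_opp (R : realType) (F : R -> R) a m : hasRS F a m -> hasRS (fun s => - F s) a (- m).
Proof. move=> [d d0 H]; exists d => // t Ht; rewrite H // intrN; ring. Qed.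
Lemma hasLS_opp (R : realType) (F : R -> R) a m : hasLS F a m -> hasLS (fun s => - F s) a (- m).
Proof. move=> [d d0 H]; exists d => // t Ht; rewrite H // intrN; ring. Qed.

Definition bz (b : bool) : int := (b : nat)%:Z.

Section PWO.
Variable R : realType.
Variable G : tcurve R.
Notation V := (tV G).
Notation E := (tE G).
Notation src := (@tsrc R G).
Notation tgt := (@ttgt R G).
Notation l := (@tl R G).
Notation pt := (pt G).
Variables (P : {set E}) (W : {set V}) (O : E -> bool).
Hypothesis hPW : (P != finset.set0) || (W != finset.set0).

Definition Fe e := fun s => dPW P W (ptAt e s).
Definition Ae e := dPW P W (Vert (src e)).
Definition Be e := dPW P W (Vert (tgt e)).
Definition ce e := (Be e + l e - Ae e) / 2.

Lemma ceE e : 2 * ce e = Be e + l e - Ae e.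
Proof. by rewrite /ce mulrC divfK // pnatr_eq0. Qed.

Lemma tentAB e : Ae e <= Be e + l e. Proof. exact: (dPW_AB hPW e).1. Qed.
Lemma tentBA e : Be e <= Ae e + l e. Proof. exact: (dPW_AB hPW e).2. Qed.
Lemma tentF e : e \notin P -> forall s, 0 <= s <= l e -> Fe e s = Num.min (Ae e + s) (Be e + l e - s).
Proof. by move=> eP s Hs; rewrite /Fe dPW_edgeN. Qed.
Lemma flatF e : e \in P -> forall s, 0 <= s <= l e -> Fe e s = 0.
Proof. by move=> eP s Hs; rewrite /Fe dPW_edgeP. Qed.

Lemma Fe_PLSC e : exists S, PLSC (Fe e) (l e) S (e \notin P).
Proof.
case eP: (e \in P) => /=.
  by exists [::]; exact: (flat_PLSC (flatF eP)).
exists [:: ce e]; exact: (tent_PLSC (l_pos e) (tentAB e) (tentBA e) (ceE e) (tentF (negbT eP))).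
Qed.

Lemma negF_PLSC e : exists S, PLSC (fun s => - dPW P W (ptAt e s)) (l e) S (e \notin P).
Proof. have [S H] := Fe_PLSC e; exists S; exact: PLSC_opp H. Qed.

Lemma negF_RS e a : 0 <= a -> a < l e -> exists m, cls (e \notin P) m /\ hasRS (fun s => - dPW P W (ptAt e s)) a m.
Proof. by move=> a0 al; have [S H] := negF_PLSC e; apply: PLSC_RS H a0 al. Qed.
Lemma negF_LS e a : 0 < a -> a <= l e -> exists m, cls (e \notin P) m /\ hasLS (fun s => - dPW P W (ptAt e s)) a m.
Proof. by move=> a0 al; have [S H] := negF_PLSC e; apply: PLSC_LS H a0 al. Qed.

Lemma Pieces_is_rat (f : pt -> R) : (forall e, Pieces (fun s => f (ptAt e s)) 0 (l e)) -> is_rat f.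
Proof. by move=> H e; exact: H e. Qed.

Lemma PLSZ_is_rat (f : pt -> R) : (forall e, exists S, PLSZ (fun s => f (ptAt e s)) 0 (l e) S) -> is_rat f.
Proof.
move=> H; apply: Pieces_is_rat => e; have [S HS] := H e.
exact: toPieces (l_pos e) HS.
Qed.

Lemma negd_rat : is_rat (fun q => - dPW P W q).
Proof.
apply: PLSZ_is_rat => e; have [S H] := negF_PLSC e; exists S; exact: PLSC_PLSZ H.
Qed.

Lemma rslopeE (f : pt -> R) e a : rslope f e a = ers (fun s => f (ptAt e s)) a.
Proof. by []. Qed.
Lemma lslopeE (f : pt -> R) e a : lslope f e a = els (fun s => f (ptAt e s)) a.
Proof. by []. Qed.

Lemma negd_rs e a : 0 <= a -> a < l e -> rslope (fun q => - dPW P W q) e a =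
  if e \in P then 0 else (if a < ce e then -1 else 1).
Proof.
move=> a0 al; rewrite rslopeE; case eP: (e \in P).
  by apply: ersE; rewrite -oppr0; apply: hasRS_opp; exact: (flat_RS (flatF eP)) a0 al.
apply: ersE; rewrite (_ : (if a < ce e then -1 else 1) = - (if a < ce e then 1 else -1)); last by case: ifP.
apply: hasRS_opp; exact: (tent_RS (l_pos e) (tentAB e) (tentBA e) (ceE e) (tentF (negbT eP))) a0 al.
Qed.

Lemma negd_ls e a : 0 < a -> a <= l e -> lslope (fun q => - dPW P W q) e a =
  if e \in P then 0 else (if ce e < a then -1 else 1).
Proof.
move=> a0 al; rewrite lslopeE; case eP: (e \in P).
  by apply: elsE; rewrite -oppr0; apply: hasLS_opp; exact: (flat_LS (flatF eP)) a0 al.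
apply: elsE; rewrite (_ : (if ce e < a then -1 else 1) = - (if ce e < a then 1 else -1)); last by case: ifP.
apply: hasLS_opp; exact: (tent_LS (l_pos e) (tentAB e) (tentBA e) (ceE e) (tentF (negbT eP))) a0 al.
Qed.

End PWO.

Lemma sumz (I : finType) (Pr : pred I) (F : I -> nat) :
  ((\sum_(i | Pr i) F i)%N)%:Z = \sum_(i | Pr i) (F i)%:Z.
Proof. exact: (big_morph Posz PoszD (erefl _)). Qed.

Lemma card_sumz (I : finType) (p : pred I) : (#|[set i | p i]%SET|)%:Z = \sum_i bz (p i).
Proof.
rewrite -sum1_card sumz big_mkcond; apply: eq_bigr => i _; rewrite inE.
  by case: (p i).
Qed.

Lemma sum_if (I : finType) (A : {set I}) (F1 F2 : I -> int) :
  \sum_(i in A) F1 i + \sum_(i in ~: A) F2 i = \sum_i (if i \in A then F1 i else F2 i).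
Proof.
rewrite [RHS](bigID (fun i => i \in A)) /=; congr (_ + _).
  by apply: eq_bigr => i ->.
apply: eq_big => [i|i]; first by rewrite finset.in_setC.
by rewrite finset.in_setC => /negbTE ->.
Qed.

Section KEY.
Variable R : realType.
Variable G : tcurve R.
Notation V := (tV G).
Notation E := (tE G).
Notation src := (@tsrc R G).
Notation tgt := (@ttgt R G).
Notation l := (@tl R G).
Notation pt := (pt G).
Variables (P : {set E}) (W : {set V}) (O : E -> bool).
Hypothesis hPW : (P != finset.set0) || (W != finset.set0).
Hypothesis cyc : cyclic_orient P O.

Notation negd := (fun q => - dPW P W q).

Lemma key_inner e t : 0 < t < l e ->
  divf negd (Inner e t) = 2 * DPW P W O (Inner e t) - Kcan (Inner e t).
Proof.
move=> /andP[t0 tl]; rewrite /divf /DPW /Kcan subr0.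
rewrite (negd_rs hPW) ?(ltW t0) // (negd_ls hPW) ?(ltW tl) //.
case eP: (e \in P).
  by rewrite (asboolF (flat_ncrit (flatF hPW eP) (t:=t))).
have hT := tent_crit (l_pos e) (tentAB hPW e) (tentBA hPW e) (ceE P W e) (tentF hPW (negbT eP)).
case: (eqVneq t (ce P W e)) => tc.
  have Hc : crit P W e t by apply/(hT t); [apply/andP; split|].
  rewrite (asboolT Hc).
  have c0 : 0 < ce P W e by rewrite -tc.
  have cl : ce P W e < l e by rewrite -tc.
  have [Hl Hr] := tent_into_c (l_pos e) (tentAB hPW e) (tentBA hPW e) (ceE P W e) (tentF hPW (negbT eP)) c0 cl.
  rewrite -tc in Hl Hr; rewrite (asboolT Hl) (asboolT Hr) -tc ltxx.
  by [].
have Hc : ~ crit P W e t.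
  by move=> /(hT t) H; move/eqP: tc; apply; apply: H; apply/andP.
rewrite (asboolF Hc).
case: (ltgtP t (ce P W e)) => //; by move: tc => /eqP.
Qed.

Lemma rs0E e : rslope negd e 0 = if e \in P then 0 else 2 * bz `[< into_r P W e 0 >] - 1.
Proof.
rewrite (negd_rs hPW) ?lexx ?l_pos //; case eP: (e \in P) => //.
have hT := tent_intoR0 (l_pos e) (tentAB hPW e) (tentBA hPW e) (ceE P W e) (tentF hPW (negbT eP)).
have c0 := c_ge0 (l_pos e) (tentAB hPW e) (tentBA hPW e) (ceE P W e).
case: (eqVneq (ce P W e) 0) => Hc.
  by rewrite (asboolT (hT.2 Hc)) Hc ltxx.
have -> : `[< into_r P W e 0 >] = false by apply: asboolF => /hT E0; move: Hc; rewrite E0 eqxx.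
by rewrite lt_neqAle eq_sym Hc c0.
Qed.

Lemma ls1E e : lslope negd e (l e) = if e \in P then 0 else 2 * bz `[< into_l P W e (l e) >] - 1.
Proof.
rewrite (negd_ls hPW) ?lexx ?l_pos //; case eP: (e \in P) => //.
have hT := tent_intoLl (l_pos e) (tentAB hPW e) (tentBA hPW e) (ceE P W e) (tentF hPW (negbT eP)).
have c0 := c_lel (l_pos e) (tentAB hPW e) (tentBA hPW e) (ceE P W e).
case: (eqVneq (ce P W e) (l e)) => Hc.
  by rewrite (asboolT (hT.2 Hc)) Hc ltxx.
have -> : `[< into_l P W e (l e) >] = false by apply: asboolF => /hT E0; move: Hc; rewrite E0 eqxx.
by rewrite lt_neqAle Hc c0.
Qed.


Lemma key_vert v : divf negd (Vert v) = 2 * DPW P W O (Vert v) - Kcan (Vert v).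
Proof.
rewrite /divf /DPW /Kcan.
rewrite (eq_bigr _ (fun e _ => rs0E e)) (eq_bigr _ (fun e _ => ls1E e)).
rewrite big_mkcond [X in _ + X]big_mkcond /=.
rewrite /indegV PoszD !sumz sum_if.
rewrite /degin_set PoszD !card_sumz.
have Hcyc := cyc v; move/(congr1 Posz): Hcyc; rewrite !card_sumz => Hcyc.
set ir := fun e => `[< into_r P W e 0 >].
set il := fun e => `[< into_l P W e (l e) >].
set T := fun e => (if src e == v then (if e \in P then 0 else 2 * bz (ir e) - 1) else 0)
   + (if tgt e == v then (if e \in P then 0 else 2 * bz (il e) - 1) else 0).
set Ie := fun e : E => (if e \in P then (((O e && (tgt e == v)) + (~~ O e && (src e == v)))%N)%:Z
                   else (((ir e && (src e == v)) + (il e && (tgt e == v)))%N)%:Z).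
set Se := fun e : E => bz ((e \in [set: E]%SET) && (src e == v)).
set Ue := fun e : E => bz ((e \in [set: E]%SET) && (tgt e == v)).
set He := fun e : E => bz ((e \in P) && ((if O e then tgt e else src e) == v)).
set Ce := fun e : E => bz ((e \in P) && ((if O e then src e else tgt e) == v)).
have per : forall e, T e + Se e + Ue e + He e = 2 * Ie e + Ce e.
  move=> e; rewrite /T /Se /Ue /He /Ce /Ie !inE /=.
  case: (e \in P); case: (O e); case: (src e == v); case: (tgt e == v);
    case: (ir e); case: (il e); by [].
have Hsum : \sum_e T e + \sum_e Se e + \sum_e Ue e + \sum_e He e = 2 * \sum_e Ie e + \sum_e Ce e.
  by rewrite -!big_split mulr_sumr -big_split; apply: eq_bigr => e _; exact: per.
have Hcyc' : \sum_e He e = \sum_e Ce e := Hcyc.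
rewrite -big_split /= -/(T _).
have -> : \sum_i (T i) = \sum_e T e by [].
rewrite PoszM.
rewrite [X in 2 * (X - 1 + _)](_ : _ = \sum_e Ie e); last by apply: eq_bigr.
rewrite [X in _ + (X + _)](_ : _ = \sum_e Se e); last by apply: eq_bigr.
rewrite [X in _ + (_ + X)](_ : _ = \sum_e Ue e); last by apply: eq_bigr.
lia.
Qed.
End KEY.

Lemma key (R : realType) (G : tcurve R) (P : {set tE G}) (W : {set tV G}) (O : tE G -> bool) :
  (P != finset.set0) || (W != finset.set0) -> cyclic_orient P O ->
  forall p, is_pt p -> divf (fun q => - dPW P W q) p = 2 * DPW P W O p - Kcan p.
Proof.
move=> hPW cyc [v|e t] /= H; [exact: key_vert | exact: key_inner].
Qed.

Lemma theta (R : realType) (G : tcurve R) (P : {set tE G}) (W : {set tV G}) (O : tE G -> bool) :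
  (P != finset.set0) || (W != finset.set0) -> cyclic_orient P O -> theta_char (DPW P W O).
Proof.
move=> hPW cyc; exists (fun q => - dPW P W q); split; first exact: negd_rat.
by move=> p Hp; rewrite (key hPW cyc).
Qed.

Lemma hasRS_half (R : realType) (F1 F2 : R -> R) a m1 m2 k : hasRS F1 a m1 -> hasRS F2 a m2 ->
  m1 - m2 = k * 2 -> hasRS (fun s => (F1 s - F2 s) / 2) a k.
Proof.
move=> [d1 d10 H1] [d2 d20 H2] Hk; have [h [hp h1 h2]] := small2 d10 d20.
exists h => // t /andP[t0 th].
rewrite H1 ?t0 /=; last by lra.
rewrite H2 ?t0 /=; last by lra.
have -> : (k%:~R : R) = ((m1 - m2)%:~R) / 2 by rewrite Hk intrM -mulrA divff ?mulr1 // intr_eq0.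
by rewrite intrB; field.
Qed.

Lemma hasLS_half (R : realType) (F1 F2 : R -> R) a m1 m2 k : hasLS F1 a m1 -> hasLS F2 a m2 ->
  m1 - m2 = k * 2 -> hasLS (fun s => (F1 s - F2 s) / 2) a k.
Proof.
move=> [d1 d10 H1] [d2 d20 H2] Hk; have [h [hp h1 h2]] := small2 d10 d20.
exists h => // t /andP[t0 th].
rewrite H1 ?t0 /=; last by lra.
rewrite H2 ?t0 /=; last by lra.
have -> : (k%:~R : R) = ((m1 - m2)%:~R) / 2 by rewrite Hk intrM -mulrA divff ?mulr1 // intr_eq0.
by rewrite intrB; field.
Qed.

Lemma cls_half o m1 m2 : cls o m1 -> cls o m2 -> exists k, m1 - m2 = k * 2.
Proof. by case: o => [[]->[]->|->->]; by [exists 0 | exists 1 | exists (-1)| exists 0]. Qed.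

Section SameP.
Variable R : realType.
Variable G : tcurve R.
Notation V := (tV G).
Notation E := (tE G).
Notation src := (@tsrc R G).
Notation tgt := (@ttgt R G).
Notation l := (@tl R G).
Notation pt := (pt G).
Variables (P : {set E}) (W W' : {set V}) (O O' : E -> bool).
Hypotheses (hPW : (P != finset.set0) || (W != finset.set0)) (hPW' : (P != finset.set0) || (W' != finset.set0)).
Hypotheses (cyc : cyclic_orient P O) (cyc' : cyclic_orient P O').

Notation G1 := (fun q => - dPW P W q).
Notation G2 := (fun q => - dPW P W' q).
Notation f := (fun q => (dPW P W' q - dPW P W q) / 2).

Lemma f_rat : is_rat f.
Proof.
apply: PLSZ_is_rat => e.
have [S1 H1] := Fe_PLSC hPW e; have [S2 H2] := Fe_PLSC hPW' e.
by exists (S1 ++ S2); exact: PLSC_half H1 H2.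
Qed.

Lemma f_rs e a : 0 <= a -> a < l e -> rslope f e a * 2 = rslope G1 e a - rslope G2 e a.
Proof.
move=> a0 al.
have [m1 [c1 H1]] := negF_RS hPW a0 al; have [m2 [c2 H2]] := negF_RS hPW' a0 al.
have [k Hk] := cls_half c1 c2.
rewrite !rslopeE (ersE H1) (ersE H2) Hk; congr (_ * _); apply: ersE.
apply: hasRS_ext (hasRS_half H1 H2 Hk) => s /=; congr (_ / _); ring.
Qed.

Lemma f_ls e a : 0 < a -> a <= l e -> lslope f e a * 2 = lslope G1 e a - lslope G2 e a.
Proof.
move=> a0 al.
have [m1 [c1 H1]] := negF_LS hPW a0 al; have [m2 [c2 H2]] := negF_LS hPW' a0 al.
have [k Hk] := cls_half c1 c2.
rewrite !lslopeE (elsE H1) (elsE H2) Hk; congr (_ * _); apply: elsE.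
apply: hasLS_ext (hasLS_half H1 H2 Hk) => s /=; congr (_ / _); ring.
Qed.

Lemma f_div p : is_pt p -> divf f p * 2 = divf G1 p - divf G2 p.
Proof.
case: p => [v|e t] /=.
  move=> _; rewrite mulrDl !mulr_suml.
  rewrite (eq_bigr _ (fun e _ => f_rs (lexx 0) (l_pos e))).
  rewrite (eq_bigr _ (fun e _ => f_ls (l_pos e) (lexx (l e)))).
  rewrite !sumrB; ring.
move=> /andP[t0 tl]; rewrite mulrDl f_rs ?f_ls ?(ltW t0) ?(ltW tl) //; lia.
Qed.

Lemma sameP_equiv : lin_equiv (DPW P W O) (DPW P W' O').
Proof.
exists f; split; first exact: f_rat.
move=> p Hp; have := f_div Hp; rewrite (key hPW cyc Hp) (key hPW' cyc' Hp); lia.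
Qed.
End SameP.

Lemma intr_sum (R : realType) (I : finType) (Pr : pred I) (F : I -> int) :
  ((\sum_(i | Pr i) F i)%:~R : R) = \sum_(i | Pr i) (F i)%:~R.
Proof. by rewrite rmorph_sum. Qed.

Section DiffP.
Variable R : realType.
Variable G : tcurve R.
Notation V := (tV G).
Notation E := (tE G).
Notation src := (@tsrc R G).
Notation tgt := (@ttgt R G).
Notation l := (@tl R G).
Notation pt := (pt G).
Variables (P P' : {set E}) (W W' : {set V}) (O O' : E -> bool).
Hypotheses (hPW : (P != finset.set0) || (W != finset.set0)) (hPW' : (P' != finset.set0) || (W' != finset.set0)).
Hypotheses (cyc : cyclic_orient P O) (cyc' : cyclic_orient P' O').
Variable f : pt -> R.
Hypothesis frat : is_rat f.
Hypothesis fdiv : forall p, is_pt p -> DPW P W O p - DPW P' W' O' p = divf f p.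

Notation G1 := (fun q => - dPW P W q).
Notation G2 := (fun q => - dPW P' W' q).
Definition hh := fun q => 2%:~R * f q + (G2 q + (-1)%:~R * G1 q).

Lemma f_PLSZ e : exists S, PLSZ (fun s => f (ptAt e s)) 0 (l e) S.
Proof. exact: ofPieces (frat e). Qed.

Lemma hh_PLSZ e : exists S, PLSZ (fun s => hh (ptAt e s)) 0 (l e) S.
Proof.
have [S0 H0] := f_PLSZ e.
have [S1 H1] := negF_PLSC hPW e; have [S2 H2] := negF_PLSC hPW' e.
exists (S0 ++ (S2 ++ S1)).
exact: PLSZ_add (PLSZ_scale 2 H0) (PLSZ_add (PLSC_PLSZ H2) (PLSZ_scale (-1) (PLSC_PLSZ H1))).
Qed.

Lemma hh_rs e a : 0 <= a -> a < l e ->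
  rslope hh e a = 2 * rslope f e a + (rslope G2 e a + (-1) * rslope G1 e a).
Proof.
move=> a0 al; have [S0 H0] := f_PLSZ e; have [mf Hf] := PLSZ_RS H0 a0 al.
have [m1 [_ H1]] := negF_RS hPW a0 al; have [m2 [_ H2]] := negF_RS hPW' a0 al.
rewrite !rslopeE (ersE Hf) (ersE H1) (ersE H2); apply: ersE.
exact: hasRS_add (hasRS_scale 2 Hf) (hasRS_add H2 (hasRS_scale (-1) H1)).
Qed.

Lemma hh_ls e a : 0 < a -> a <= l e ->
  lslope hh e a = 2 * lslope f e a + (lslope G2 e a + (-1) * lslope G1 e a).
Proof.
move=> a0 al; have [S0 H0] := f_PLSZ e; have [mf Hf] := PLSZ_LS H0 a0 al.
have [m1 [_ H1]] := negF_LS hPW a0 al; have [m2 [_ H2]] := negF_LS hPW' a0 al.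
rewrite !lslopeE (elsE Hf) (elsE H1) (elsE H2); apply: elsE.
exact: hasLS_add (hasLS_scale 2 Hf) (hasLS_add H2 (hasLS_scale (-1) H1)).
Qed.

Lemma hh_div p : is_pt p -> divf hh p = 0.
Proof.
move=> Hp.
have E0 : divf hh p = 2 * divf f p + (divf G2 p + (-1) * divf G1 p).
  case: p Hp => [v|e t] /=.
    move=> _; rewrite (eq_bigr _ (fun e _ => hh_rs (lexx 0) (l_pos e))).
    rewrite (eq_bigr _ (fun e _ => hh_ls (l_pos e) (lexx (l e)))).
    rewrite !big_split /= -!mulr_sumr; ring.
  move=> /andP[t0 tl]; rewrite hh_rs ?hh_ls ?(ltW t0) ?(ltW tl) //; ring.
rewrite E0 -(fdiv Hp) (key hPW cyc Hp) (key hPW' cyc' Hp); lia.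
Qed.

Definition kk e := rslope hh e 0.

Lemma hh_affine e : affine (fun s => hh (ptAt e s)) 0 (l e) (kk e).
Proof.
have [S HS] := hh_PLSZ e.
have [k Hk] := harmonic HS (l_pos e) (fun t Ht => hh_div (p := Inner e t) Ht).
suff -> : kk e = k by [].
by rewrite /kk rslopeE; apply: ersE; apply: affine_RS Hk (l_pos e).
Qed.

Lemma hh_ls_l e : lslope hh e (l e) = - kk e.
Proof. by rewrite lslopeE; apply: elsE; apply: affine_LS (@hh_affine e) (l_pos e). Qed.

Lemma hh_edge e : hh (Vert (tgt e)) = hh (Vert (src e)) + (kk e)%:~R * l e.
Proof.
have := @hh_affine e (l e); rewrite -ptAtl ptAt0 subr0 => -> //.
by rewrite (ltW (l_pos e)) lexx.
Qed.

Lemma hh_vert v : \sum_(e | src e == v) (kk e : int) = \sum_(e | tgt e == v) kk e.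
Proof.
have := hh_div (p := Vert v) I; rewrite /divf.
rewrite (eq_bigr _ (fun e _ => hh_ls_l e)) sumrN => /eqP; rewrite subr_eq0 => /eqP.
by [].
Qed.

Lemma kk0 e : kk e = 0.
Proof.
set K := fun e => ((kk e)%:~R : R).
have H1 : \sum_e K e * (hh (Vert (tgt e)) - hh (Vert (src e))) = \sum_e K e ^+ 2 * l e.
  by apply: eq_bigr => e' _; rewrite hh_edge /K; ring.
have Ht : \sum_e K e * hh (Vert (tgt e)) = \sum_v hh (Vert v) * \sum_(e | tgt e == v) K e.
  rewrite (partition_big tgt xpredT) //=; apply: eq_bigr => v _; rewrite mulr_sumr.
  by apply: eq_bigr => e' /eqP ->; rewrite mulrC.
have Hs : \sum_e K e * hh (Vert (src e)) = \sum_v hh (Vert v) * \sum_(e | src e == v) K e.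
  rewrite (partition_big src xpredT) //=; apply: eq_bigr => v _; rewrite mulr_sumr.
  by apply: eq_bigr => e' /eqP ->; rewrite mulrC.
have Hv : forall v, \sum_(e | src e == v) K e = \sum_(e | tgt e == v) K e.
  by move=> v; rewrite /K -!intr_sum hh_vert.
have H0 : \sum_e K e ^+ 2 * l e = 0.
  rewrite -H1; under eq_bigr do rewrite mulrBr.
  rewrite sumrB Ht Hs; under [X in _ - X]eq_bigr do rewrite Hv.
  by rewrite subrr.
have Hge : forall i : E, true -> 0 <= K i ^+ 2 * l i.
  by move=> i _; apply: mulr_ge0; [apply: sqr_ge0 | apply: ltW; apply: l_pos].
have := psumr_eq0P Hge H0 (i := e) isT.
move/eqP; rewrite mulf_eq0 (gt_eqF (l_pos e)) orbF expf_eq0 /= /K intr_eq0.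
by move/eqP.
Qed.

Lemma PeqP' : P = P'.
Proof.
apply/setP => e; apply/idP/idP => He; apply/negPn/negP => He'.
  have [m1 [c1 H1]] := negF_RS hPW (lexx 0) (l_pos e).
  have [m2 [c2 H2]] := negF_RS hPW' (lexx 0) (l_pos e).
  have [S0 H0] := f_PLSZ e; have [mf Hf] := PLSZ_RS H0 (lexx 0) (l_pos e).
  have := hh_rs (lexx 0) (l_pos e); rewrite -/(kk e) kk0 !rslopeE (ersE H1) (ersE H2) (ersE Hf).
  move: c1 c2; rewrite He (negbTE He') /= => -> [] ->; lia.
have [m1 [c1 H1]] := negF_RS hPW (lexx 0) (l_pos e).
have [m2 [c2 H2]] := negF_RS hPW' (lexx 0) (l_pos e).
have [S0 H0] := f_PLSZ e; have [mf Hf] := PLSZ_RS H0 (lexx 0) (l_pos e).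
have := hh_rs (lexx 0) (l_pos e); rewrite -/(kk e) kk0 !rslopeE (ersE H1) (ersE H2) (ersE Hf).
move: c1 c2; rewrite He (negbTE He') /= => [] [] -> ->; lia.
Qed.
End DiffP.

Local Close Scope classical_set_scope.
Local Close Scope ring_scope.

Theorem proposition3p4 (R : realType) (G : tcurve R)
    (P P' : {set tE G}) (W W' : {set tV G}) (O O' : tE G -> bool) :
  evenP P -> evenP P' ->
  (P != finset.set0) || (W != finset.set0) -> (P' != finset.set0) || (W' != finset.set0) ->
  cyclic_orient P O -> cyclic_orient P' O' ->
  (lin_equiv (DPW P W O) (DPW P' W' O') <-> P = P') /\
  theta_char (DPW P W O).
Proof.
move=> _ _ hPW hPW' cyc cyc'; split; last exact: theta hPW cyc.
split.
  by move=> [f [frat fdiv]]; exact: (PeqP' hPW hPW' cyc cyc' frat fdiv).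
by move=> EP; subst P'; exact: sameP_equiv.
Qed.
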